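(* Let $V$ be a vertex algebra and $a\in V$. Then: (1) $a_0a_0\cdots a_0a\in C_2(V)$ (for any positive number of factors $a_0$); (2) if $n_1,\dots,n_t\in\{0,-1\}$ and the number $k$ of indices $i$ with $n_i=-1$ satisfies $k<t$, then $a_{n_1}a_{n_2}\cdots a_{n_t}a\equiv \underbrace{a_{-1}\cdots a_{-1}}_{k}\underbrace{a_0\cdots a_0}_{t-k}a\equiv 0 \pmod{C_2(V)}$.
   Context: A vertex algebra $(V,Y,\mathbf{1})$ is over $\mathbb{C}$; for $u\in V$ write $Y(u,z)=\sum_{n\in\mathbb{Z}}u_nz^{-n-1}$ with $u_n\in\operatorname{End}V$. Iterated products are nested to the right: $a_{n_1}a_{n_2}\cdots a_{n_t}a=a_{n_1}(a_{n_2}(\cdots(a_{n_t}a)))$. $C_2(V)=\operatorname{span}_{\mathbb{C}}\{u_{-2}v: u,v\in V\}$. *)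

(* Defs.v *)
From mathcomp Require Import all_boot all_order all_algebra.
From mathcomp Require Import complex.
From mathcomp Require Import Rstruct.
From Stdlib Require Import Reals.
Set Implicit Arguments. Unset Strict Implicit. Unset Printing Implicit Defensive.
Import Order.TTheory GRing.Theory Num.Theory.
Local Open Scope ring_scope.

Definition CC : fieldType := complex R.

Definition gbinom (p : int) (i : nat) : CC :=
  (\prod_(j < i) (p%:~R - (j : nat)%:R)) / (i`!)%:R.

(* [Y u n v] is  u_n v, the coefficient of z^{-n-1} in Y(u,z)v. *)
Definition vertex_algebra_axioms (V : lmodType CC)
    (Y : V -> int -> V -> V) (vac : V) : Prop :=
  (forall (a : CC) (u u' v : V) (n : int),
      Y (a *: u + u') n v = a *: Y u n v + Y u' n v) /\
  (forall (a : CC) (u v v' : V) (n : int),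
      Y u n (a *: v + v') = a *: Y u n v + Y u n v') /\
  (* truncation: Y(u,z)v has only finitely many negative powers of z *)
  (forall u v : V, exists N : int, forall n : int, N <= n -> Y u n v = 0) /\
  (* vacuum: Y(1,z) = id *)
  (forall (v : V) (n : int), Y vac n v = if n == -1 then v else 0) /\
  (* creation: Y(u,z)1 = u + z V[[z]] *)
  (forall u : V, Y u (-1) vac = u /\ forall n : int, 0 <= n -> Y u n vac = 0) /\
  (* Borcherds (Jacobi) identity; the sums over i >= 0 are finite by truncation,
     so we require equality of all sufficiently long partial sums *)
  (forall (u v w : V) (p q r : int), exists N : nat, forall M : nat, leq N M ->
      \sum_(i < M) gbinom p i *: Y (Y u (r + (i : nat)%:Z) v) (p + q - (i : nat)%:Z) w
    = \sum_(i < M) ((-1) ^+ i * gbinom r i) *: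
          (Y u (p + r - (i : nat)%:Z) (Y v (q + (i : nat)%:Z) w)
           - ((-1) ^ r) *: Y v (q + r - (i : nat)%:Z) (Y u (p + (i : nat)%:Z) w))).

Definition C2 (V : lmodType CC) (Y : V -> int -> V -> V) (x : V) : Prop :=
  exists s : seq (CC * V * V),
    x = \sum_(t <- s) t.1.1 *: Y t.1.2 (-2) t.2.

(* Right-nested iterated product  a_{n_1} a_{n_2} ... a_{n_t} a  for ns = [n_1;...;n_t]. *)
Definition iter_prod (V : lmodType CC) (Y : V -> int -> V -> V) (a : V)
    (ns : seq int) : V :=
  foldr (fun n x => Y a n x) a ns.

(* Main.v *)
Require Import Defs.
From mathcomp Require Import all_boot all_order all_algebra.
From mathcomp Require Import complex Rstruct.
From mathcomp Require Import zify.
Set Implicit Arguments. Unset Strict Implicit. Unset Printing Implicit Defensive.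
Import GRing.Theory Num.Theory.
Local Open Scope ring_scope.

Lemma C2_0 (V : lmodType CC) (Y : V -> int -> V -> V) : C2 Y 0.
Proof. by exists [::]; rewrite big_nil. Qed.

Lemma C2_gen (V : lmodType CC) (Y : V -> int -> V -> V) u v : C2 Y (Y u (-2) v).
Proof. by exists [:: (1, u, v)]; rewrite big_seq1 scale1r. Qed.

Lemma C2_add (V : lmodType CC) (Y : V -> int -> V -> V) x y :
  C2 Y x -> C2 Y y -> C2 Y (x + y).
Proof. by move=> [s ->] [t ->]; exists (s ++ t); rewrite big_cat. Qed.

Lemma C2_scale (V : lmodType CC) (Y : V -> int -> V -> V) (c : CC) x :
  C2 Y x -> C2 Y (c *: x).
Proof.
move=> [s ->]; exists [seq (c * t.1.1, t.1.2, t.2) | t <- s].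
rewrite big_map scaler_sumr; apply: eq_bigr => t _ /=; by rewrite scalerA.
Qed.

Lemma C2_sub (V : lmodType CC) (Y : V -> int -> V -> V) x y :
  C2 Y x -> C2 Y y -> C2 Y (x - y).
Proof. by move=> hx hy; rewrite -scaleN1r; apply: C2_add => //; apply: C2_scale. Qed.

Lemma C2_sum (V : lmodType CC) (Y : V -> int -> V -> V) M (F : 'I_M -> V) :
  (forall i, C2 Y (F i)) -> C2 Y (\sum_i F i).
Proof.
move=> h; apply: (big_ind (C2 Y)) => //; [exact: C2_0 | exact: C2_add].
Qed.

Lemma C2_lin (V : lmodType CC) (Y : V -> int -> V -> V) (f : V -> V) :
  (forall (c : CC) x y, f (c *: x + y) = c *: f x + f y) ->
  (forall u v, C2 Y (f (Y u (-2) v))) -> forall x, C2 Y x -> C2 Y (f x).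
Proof.
move=> lf hg x [s ->].
have f0 : f 0 = 0.
  have h := lf 1 0 0; rewrite !scale1r addr0 in h.
  by apply: (addrI (f 0)); rewrite addr0 -h.
elim: s => [|t s IH]; first by rewrite big_nil f0; exact: C2_0.
rewrite big_cons lf; apply: C2_add => //; exact: C2_scale.
Qed.


Lemma Yl0 (V : lmodType CC) (Y : V -> int -> V -> V) vac (HV : vertex_algebra_axioms Y vac) n v :
  Y 0 n v = 0.
Proof.
case: HV => l _; have h := l 1 0 0 v n; rewrite !scale1r addr0 in h.
by apply: (addrI (Y 0 n v)); rewrite addr0 -h.
Qed.

Lemma Yr0 (V : lmodType CC) (Y : V -> int -> V -> V) vac (HV : vertex_algebra_axioms Y vac) n u :
  Y u n 0 = 0.
Proof.
case: HV => _ [l _]; have h := l 1 u 0 0 n; rewrite !scale1r addr0 in h.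
by apply: (addrI (Y u n 0)); rewrite addr0 -h.
Qed.

Lemma gb0 p : gbinom p 0 = 1.
Proof. by rewrite /gbinom big_ord0 fact0 divr1. Qed.

Lemma gb0S i : gbinom 0 i.+1 = 0.
Proof. by rewrite /gbinom big_ord_recl /= subr0 mul0r mul0r. Qed.

Lemma gb1 p : gbinom p 1 = p%:~R.
Proof. by rewrite /gbinom big_ord1 /= subr0 divr1. Qed.

Lemma sum_only0 (V : lmodType CC) M (F : 'I_M.+1 -> V) :
  (forall i : 'I_M.+1, (0 < i)%N -> F i = 0) -> \sum_i F i = F ord0.
Proof.
move=> h; rewrite big_ord_recl big1 ?addr0 // => i _; exact: h.
Qed.


Lemma Dlem (V : lmodType CC) (Y : V -> int -> V -> V) vac (HV : vertex_algebra_axioms Y vac) x w p :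
  Y (Y x (-2) vac) p w + p%:~R *: Y x (p - 1) w = 0.
Proof.
have HV' := HV; case: HV' => _ [_ [_ [hvac [hcr hB]]]].
have [N HN] := hB x vac w p 0 (-2).
have := HN (N.+2) (leqW (leqnSn _)).
move=> H.
have vac0 : forall n v, n != -1 -> Y vac n v = 0.
  by move=> n v hn; rewrite hvac (negbTE hn).
rewrite [X in _ = X]big1 in H; last first.
  move=> i _; rewrite !vac0; try (apply/eqP; lia).
  by rewrite (Yr0 HV) scaler0 subr0 scaler0.
rewrite 2!big_ord_recl big1 /= in H; last first.
  move=> i _ /=. have -> : bump 0 (bump 0 i) = i.+2 by [].
  rewrite (proj2 (hcr x)); last by lia.
  by rewrite (Yl0 HV) scaler0.
move: H; rewrite gb0 scale1r addr0 (_ : bump 0 0 = 1%N) // gb1 (_ : -2 + 1%:Z = -1) //.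
rewrite (proj1 (hcr x)) => <-.
congr (_ + _); first by congr Y; lia.
by rewrite addr0; congr (_ *: _); congr Y; lia.
Qed.


Lemma intr_nz (z : int) : z != 0 -> (z%:~R : CC) != 0.
Proof. by move=> h; rewrite /CC intr_eq0. Qed.

Lemma Lneg_nat (V : lmodType CC) (Y : V -> int -> V -> V) vac (HV : vertex_algebra_axioms Y vac) (m : nat) :
  forall x w, C2 Y (Y x (- (m.+2)%:Z) w).
Proof.
elim: m => [|m IH] x w; first exact: C2_gen.
have E := Dlem HV x w (- (m.+2)%:Z).
move/eqP: E; rewrite addrC addr_eq0 => /eqP E.
have nz : ((- (m.+2)%:Z)%:~R : CC) != 0 by apply: intr_nz; lia.
have -> : Y x (- (m.+3)%:Z) w = ((- (m.+2)%:Z)%:~R)^-1 *: (- Y (Y x (-2) vac) (- (m.+2)%:Z) w).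
  rewrite -E scalerA mulVf // scale1r; congr Y; lia.
apply: C2_scale; rewrite -scaleN1r; apply: C2_scale; exact: IH.
Qed.

Lemma Lneg (V : lmodType CC) (Y : V -> int -> V -> V) vac (HV : vertex_algebra_axioms Y vac) (n : int) x w :
  n <= -2 -> C2 Y (Y x n w).
Proof.
move=> hn; have -> : n = - (`|n| - 2)%N.+2%:Z by lia.
exact: Lneg_nat HV _ x w.
Qed.


Lemma P0 : Posz 0%N = 0. Proof. by []. Qed.

Lemma Pres (V : lmodType CC) (Y : V -> int -> V -> V) vac (HV : vertex_algebra_axioms Y vac) a p :
  p <= 0 -> forall u v, C2 Y (Y a p (Y u (-2) v)).
Proof.
move=> hp u v.
have HV' := HV; case: HV' => _ [_ [_ [hvac [hcr hB]]]].
have [N HN] := hB a u v p (-2) 0.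
have := HN N.+1 (leqnSn _) => H.
rewrite [X in _ = X]sum_only0 in H; last first.
  by case=> [[|k] hk] //= _; rewrite gb0S mulr0 scale0r.
move: H; rewrite /= P0 gb0 mulr1 expr0 scale1r !addr0 expr0z scale1r.
move/esym/eqP; rewrite subr_eq => /eqP ->.
apply: C2_add; last exact: C2_gen.
apply: C2_sum => i; apply: C2_scale; apply: (Lneg HV); lia.
Qed.

Lemma PresC2 (V : lmodType CC) (Y : V -> int -> V -> V) vac (HV : vertex_algebra_axioms Y vac) a p x :
  p <= 0 -> C2 Y x -> C2 Y (Y a p x).
Proof.
move=> hp; apply: (C2_lin (f := Y a p)); last exact: (Pres HV a hp).
by move=> c y z; case: HV => _ [l _]; rewrite l.
Qed.

Lemma F4 (V : lmodType CC) (Y : V -> int -> V -> V) vac (HV : vertex_algebra_axioms Y vac) u v w :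
  C2 Y (Y (Y u (-2) v) (-1) w).
Proof.
have HV' := HV; case: HV' => _ [_ [_ [hvac [hcr hB]]]].
have [N HN] := hB u v w 0 (-1) (-2).
have := HN N.+1 (leqnSn _) => H.
rewrite [X in X = _]sum_only0 in H; last first.
  by case=> [[|k] hk] //= _; rewrite gb0S scale0r.
move: H; rewrite /= P0 gb0 scale1r !addr0 add0r => ->.
apply: C2_sum => i; apply: C2_scale; apply: C2_sub; last apply: C2_scale;
  apply: (Lneg HV); lia.
Qed.

Lemma F4C2 (V : lmodType CC) (Y : V -> int -> V -> V) vac (HV : vertex_algebra_axioms Y vac) x w :
  C2 Y x -> C2 Y (Y x (-1) w).
Proof.
apply: (C2_lin (f := fun x => Y x (-1) w)); last by move=> u v; exact: (F4 HV u v w).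
by move=> c y z; case: HV => l _; rewrite l.
Qed.


Lemma F1 (V : lmodType CC) (Y : V -> int -> V -> V) vac (HV : vertex_algebra_axioms Y vac) a :
  C2 Y (Y a 0 a).
Proof.
have HV' := HV; case: HV' => _ [_ [_ [hvac [hcr hB]]]].
have [N HN] := hB a a vac (-1) (-1) 1.
have := HN N.+1 (leqnSn _) => H.
rewrite [X in _ = X]sum_only0 in H; last first.
  case=> [[|k] hk] //= _; rewrite (proj2 (hcr a)); last by lia.
  by rewrite (Yr0 HV) scaler0 subr0 scaler0.
move: H; rewrite /= P0 gb0 mulr1 expr0 scale1r !addr0 addNr (proj1 (hcr a)) expr1z scaleN1r opprK.
move=> H.
have n2 : (1 + 1 : CC) != 0 by rewrite /CC (_ : 1 + 1 = 2%:R) // pnatr_eq0.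
have -> : Y a 0 a = (1 + 1 : CC)^-1 *: (Y a 0 a + Y a 0 a).
  by rewrite -{2 3}(scale1r (Y a 0 a)) -scalerDl scalerA mulVf // scale1r.
rewrite -H; apply: C2_scale; apply: C2_sum => i; apply: C2_scale.
apply: (Lneg HV); lia.
Qed.

Lemma H1 (V : lmodType CC) (Y : V -> int -> V -> V) vac (HV : vertex_algebra_axioms Y vac) a x :
  Y a 0 (Y a (-1) x) = Y (Y a 0 a) (-1) x + Y a (-1) (Y a 0 x).
Proof.
have HV' := HV; case: HV' => _ [_ [_ [hvac [hcr hB]]]].
have [N HN] := hB a a x 0 (-1) 0.
have := HN N.+1 (leqnSn _) => H.
rewrite [X in _ = X]sum_only0 in H; last first.
  by case=> [[|k] hk] //= _; rewrite gb0S mulr0 scale0r.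
rewrite [X in X = _]sum_only0 in H; last first.
  by case=> [[|k] hk] //= _; rewrite gb0S scale0r.
move: H; rewrite /= P0 gb0 mulr1 expr0 !scale1r !addr0 !sub0r.
by move/esym/eqP; rewrite subr_eq addrC => /eqP.
Qed.


Lemma Hall (V : lmodType CC) (Y : V -> int -> V -> V) vac (HV : vertex_algebra_axioms Y vac) a ns :
  all (fun n => n == -1) ns -> C2 Y (Y a 0 (iter_prod Y a ns)).
Proof.
elim: ns => [|n ns IH] /=; first by move=> _; exact: F1 HV a.
move=> /andP [/eqP -> hns]; rewrite (H1 HV); apply: C2_add.
  apply: (F4C2 HV); exact: F1 HV a.
by apply: (PresC2 HV) => //; apply: IH.
Qed.

Lemma G (V : lmodType CC) (Y : V -> int -> V -> V) vac (HV : vertex_algebra_axioms Y vac) a ns :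
  all (fun n => (n == 0) || (n == -1)) ns -> has (fun n => n == 0) ns ->
  C2 Y (iter_prod Y a ns).
Proof.
elim: ns => [|n ns IH] //=; move=> /andP [hn hall].
case hh : (has (fun n => n == 0) ns).
  move=> _; apply: (PresC2 HV); last exact: IH.
  by case/orP: hn => /eqP ->.
rewrite orbF => /eqP ->; apply: (Hall HV).
apply/allP => y yin; move/allP: hall => /(_ y yin).
move/negbT/hasPn: hh => /(_ y yin) /negbTE ->; done.
Qed.

Lemma count_lem ns :
  all (fun n : int => (n == 0) || (n == -1)) ns ->
  leq (count (fun n : int => n == -1) ns).+1 (size ns) -> has (fun n : int => n == 0) ns.
Proof.
elim: ns => [|n ns IH] //=; move=> /andP [hn hall].
case/orP: hn => [-> //|/eqP ->] /=; rewrite add1n ltnS; exact: IH.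
Qed.


Theorem mainTheorem2 (V : lmodType CC) (Y : V -> int -> V -> V) (vac : V)
    (HV : vertex_algebra_axioms Y vac) (a : V) :
  (* (1) *)
  (forall t : nat, (0 < t)%N -> C2 Y (iter_prod Y a (nseq t 0))) /\
  (* (2) *)
  (forall ns : seq int,
      all (fun n => (n == 0) || (n == -1)) ns ->
      let k := count (fun n => n == -1) ns in
      (k < size ns)%N ->
      C2 Y (iter_prod Y a ns
            - iter_prod Y a (nseq k (-1) ++ nseq (size ns - k) 0)) /\
      C2 Y (iter_prod Y a (nseq k (-1) ++ nseq (size ns - k) 0))).
Proof.
split.
  move=> t ht; apply: (G HV).
    by apply/allP => y /nseqP [-> _].
  by rewrite has_nseq ht.
move=> ns hall k hk.
have hs : C2 Y (iter_prod Y a (nseq k (-1) ++ nseq (size ns - k) 0)).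
  apply: (G HV).
    rewrite all_cat; apply/andP; split; apply/allP => y /nseqP [-> _] //.
  by rewrite has_cat has_nseq has_nseq eqxx subn_gt0 hk orbT.
split => //; apply: C2_sub => //; apply: (G HV) => //; exact: count_lem.
Qed.
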